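(* Let $b\in\mathcal E_1$ with $b-1$ flat at $0$, let $\theta$ be the inverse germ of $t\mapsto t\,b(t)$, and let $\sigma(x)=\theta(x)^4$ with iterates $\sigma^n$ ($\sigma^0=\mathrm{id}$). There exists $\varepsilon>0$ such that for any smooth $\alpha$ with $\alpha(0)=\alpha'(0)=0$ and any $C^1$ function $\lambda$ with $\lambda(0)=\lambda'(0)=0$ (both defined on $(-\varepsilon,\varepsilon)$), setting $$u_n(x)=\alpha(x)\,\alpha(\sigma(x))\,\alpha(\sigma^2(x))\cdots\alpha(\sigma^n(x))\,\lambda(\sigma^{n+1}(x)),$$ (i) the series $\sum_{n=0}^{\infty}u_n(x)$ converges pointwise on $|x|<\varepsilon$, and (ii) its sum is of class $C^1$.
   Context: $\mathcal E_1$ denotes the ring of smooth function germs at $0\in\mathbb R$. A germ is flat at $0$ if all its derivatives (including its value) vanish at $0$. *)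

(* Defs.v *)
From Stdlib Require Import Reals.
From Coquelicot Require Import Coquelicot.
Open Scope R_scope.

Definition smooth_on (f : R -> R) (r : R) : Prop :=
  forall (n : nat) (x : R), Rabs x < r -> ex_derive_n f n x.

Definition C1_on (f : R -> R) (r : R) : Prop :=
  forall x : R, Rabs x < r -> ex_derive f x /\ continuous (Derive f) x.

Definition flat_at0 (f : R -> R) : Prop :=
  forall k : nat, Derive_n f k 0 = 0.

Fixpoint partial_prod (g : nat -> R) (n : nat) : R :=
  match n with
  | O => g O
  | S m => partial_prod g m * g (S m)
  end.

Definition iterate (s : R -> R) (n : nat) (x : R) : R := Nat.iter n s x.

Definition u_term (alpha lambda s : R -> R) (n : nat) (x : R) : R :=
  partial_prod (fun k => alpha (iterate s k x)) n * lambda (iterate s (S n) x).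

(* Main.v *)
Require Import Defs.
From Stdlib Require Import Reals.
From Coquelicot Require Import Coquelicot.
From Stdlib Require Import Ranalysis5 PSeries_reg Lra.
Open Scope R_scope.

Lemma ball_abs (x y : R) (e : posreal) : ball x e y <-> Rabs (y - x) < e.
Proof. split; intro H; exact H. Qed.

Lemma loc_abs r z : Rabs z < r -> locally z (fun w => Rabs w < r).
Proof.
  intro Hz. assert (Hp : 0 < r - Rabs z) by lra.
  exists (mkposreal _ Hp). intros w Hw. change R in w. apply ball_abs in Hw. simpl in Hw.
  pose proof (Rabs_triang_inv w z). pose proof (Rabs_triang (w - z) z).
  assert (Rabs (w - z) < r - Rabs z) by exact Hw. lra.
Qed.

Lemma cont_small f x0 e : continuous f x0 -> 0 < e ->
  exists d, 0 < d /\ forall y, Rabs (y - x0) < d -> Rabs (f y - f x0) < e.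
Proof.
  intros Hc He.
  destruct (proj1 (filterlim_locally _ _) Hc (mkposreal e He)) as [d Hd].
  exists d. split. apply cond_pos. intros y Hy. apply (Hd y). exact Hy.
Qed.

Lemma C1_ext f g r t : (forall x, Rabs x < r -> f x = g x) -> Rabs t < r ->
  ex_derive g t -> continuous (Derive g) t ->
  ex_derive f t /\ continuous (Derive f) t /\ Derive f t = Derive g t.
Proof.
  intros Heq Ht Hd Hc.
  assert (L : forall z, Rabs z < r -> locally z (fun w => g w = f w)).
  { intros z Hz. apply (filter_imp (fun w => Rabs w < r)).
    intros w Hw. symmetry. now apply Heq. now apply loc_abs. }
  split; [|split].
  - apply (ex_derive_ext_loc g). now apply L. exact Hd.
  - apply (continuous_ext_loc _ (Derive g)); [|exact Hc].
    apply (filter_imp (fun w => Rabs w < r)); [|now apply loc_abs].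
    intros w Hw. apply Derive_ext_loc. now apply L.
  - symmetry. apply Derive_ext_loc. now apply L.
Qed.

Lemma cmult (f g : R -> R) x : continuous f x -> continuous g x ->
  continuous (fun y => f y * g y) x.
Proof. intros. exact (continuous_mult f g x H H0). Qed.
Lemma cplus (f g : R -> R) x : continuous f x -> continuous g x ->
  continuous (fun y => f y + g y) x.
Proof. intros. exact (continuous_plus f g x H H0). Qed.
Lemma ccomp (f g : R -> R) x : continuous f x -> continuous g (f x) ->
  continuous (fun y => g (f y)) x.
Proof. intros. exact (continuous_comp f g x H H0). Qed.

Lemma exd_cont (f : R -> R) x : ex_derive f x -> continuous f x.
Proof. intro H. exact (ex_derive_continuous f x H). Qed.

Lemma key (alpha G s ds : R -> R) (r : R) :
 (forall t, Rabs t < r -> ex_derive alpha t /\ continuous (Derive alpha) t /\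
    is_derive s t (ds t) /\ continuous ds t /\ ex_derive G (s t) /\ continuous (Derive G) (s t)) ->
 forall t, Rabs t < r -> ex_derive (fun x => alpha x * G (s x)) t /\
   Derive (fun x => alpha x * G (s x)) t = Derive alpha t * G (s t) + alpha t * (ds t * Derive G (s t)) /\
   continuous (Derive (fun x => alpha x * G (s x))) t.
Proof.
  intros H.
  assert (D : forall t, Rabs t < r -> is_derive (fun x => alpha x * G (s x)) t
     (Derive alpha t * G (s t) + alpha t * (ds t * Derive G (s t)))).
  { intros t Ht. destruct (H t Ht) as (H1 & H2 & H3 & H4 & H5 & H6).
    pose proof (is_derive_comp G s t _ _ (Derive_correct _ _ H5) H3) as C.
    pose proof (is_derive_mult alpha (fun x => G (s x)) t _ _ (Derive_correct _ _ H1) C) as M.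
    apply M. intros; apply Rmult_comm. }
  intros t Ht. split; [|split].
  - eexists. now apply D.
  - apply is_derive_unique. now apply D.
  - apply (continuous_ext_loc _ (fun t => Derive alpha t * G (s t) + alpha t * (ds t * Derive G (s t)))).
    + apply (filter_imp (fun w => Rabs w < r)); [|now apply loc_abs].
      intros w Hw. symmetry. apply is_derive_unique. now apply D.
    + destruct (H t Ht) as (H1 & H2 & H3 & H4 & H5 & H6).
      assert (Cs : continuous s t) by exact (ex_derive_continuous s t (ex_intro _ (ds t) H3)).
      apply cplus; apply cmult.
      * exact H2.
      * apply ccomp. exact Cs. apply exd_cont. exact H5.
      * apply exd_cont. exact H1.
      * apply cmult. exact H4. apply ccomp. exact Cs. exact H6.
Qed.

Lemma pp_ext g g' n : (forall k, g k = g' k) -> partial_prod g n = partial_prod g' n.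
Proof. intro H; induction n; simpl; rewrite ?IHn, ?H; auto. Qed.

Lemma pp_shift g n : partial_prod g (S n) = g 0%nat * partial_prod (fun k => g (S k)) n.
Proof. induction n. simpl. ring. change (partial_prod g (S (S n))) with (partial_prod g (S n) * g (S (S n))).
  rewrite IHn. simpl. ring. Qed.

Lemma u_rec alpha lam s n x :
  u_term alpha lam s (S n) x = alpha x * u_term alpha lam s n (s x).
Proof.
  unfold u_term. rewrite pp_shift.
  rewrite (pp_ext (fun k => alpha (iterate s (S k) x)) (fun k => alpha (iterate s k (s x)))).
  2:{ intro k. unfold iterate. now rewrite Nat.iter_succ_r. }
  unfold iterate at 3 4. rewrite Nat.iter_succ_r. simpl. unfold iterate. ring.
Qed.


Definition Jhyp (alpha lam s ds : R -> R) (h : R) :=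
  forall t, Rabs t < h -> ex_derive alpha t /\ continuous (Derive alpha) t /\
    is_derive s t (ds t) /\ continuous ds t /\ ex_derive lam t /\ continuous (Derive lam) t /\
    Rabs (alpha t) <= 1/4 /\ Rabs (Derive alpha t) <= 1 /\ Rabs (lam t) <= 1 /\
    Rabs (Derive lam t) <= 1 /\ Rabs (ds t) <= 1/2 /\ Rabs (s t) < h.

Lemma J_bounds alpha lam s ds h : Jhyp alpha lam s ds h ->
  forall k t, Rabs t < h ->
  ex_derive (fun x => u_term alpha lam s k x) t /\
  continuous (Derive (fun x => u_term alpha lam s k x)) t /\
  Rabs (u_term alpha lam s k t) <= (1/2)^k /\
  Rabs (Derive (fun x => u_term alpha lam s k x) t) <= 4 * (1/2)^k.
Proof.
  intros HJ k. induction k as [|k IH]; intros t Ht.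
  - assert (K := key alpha lam s ds h).
    destruct (K (fun t Ht => let H := HJ t Ht in
      match H with conj a (conj b (conj c (conj d _))) =>
        conj a (conj b (conj c (conj d (let H' := HJ (s t) (proj2 (proj2 (proj2 (proj2 (proj2 (proj2 (proj2 (proj2 (proj2 (proj2 (proj2 H))))))))))) in
          conj (proj1 (proj2 (proj2 (proj2 (proj2 H'))))) (proj1 (proj2 (proj2 (proj2 (proj2 (proj2 H')))))))))) end) t Ht)
      as (E & D & C).
    assert (Eq : forall z, alpha z * lam (s z) = u_term alpha lam s 0 z) by reflexivity.
    destruct (HJ t Ht) as (_ & _ & _ & _ & _ & _ & a1 & a2 & a3 & a4 & a5 & a6).
    destruct (HJ (s t) a6) as (_ & _ & _ & _ & _ & _ & b1 & b2 & b3 & b4 & b5 & b6).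
    split; [|split; [|split]].
    + exact (ex_derive_ext _ _ t Eq E).
    + apply (continuous_ext (Derive (fun x => alpha x * lam (s x)))).
      intro z. now apply Derive_ext. exact C.
    + rewrite <- Eq. simpl. rewrite Rabs_mult.
      pose proof (Rabs_pos (alpha t)). pose proof (Rabs_pos (lam (s t))). nra.
    + rewrite (Derive_ext (fun x => u_term alpha lam s 0 x) (fun z => alpha z * lam (s z)) t (fun z => eq_sym (Eq z))), D. simpl.
      eapply Rle_trans. apply Rabs_triang. rewrite !Rabs_mult.
      pose proof (Rabs_pos (alpha t)). pose proof (Rabs_pos (lam (s t))).
      pose proof (Rabs_pos (Derive alpha t)). pose proof (Rabs_pos (ds t)).
      pose proof (Rabs_pos (Derive lam (s t))). assert (Rabs (ds t) * Rabs (Derive lam (s t)) <= 1/2) by nra. nra.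
  - assert (K := key alpha (fun x => u_term alpha lam s k x) s ds h).
    destruct (K (fun t Ht => let H := HJ t Ht in
      match H with conj a (conj b (conj c (conj d _))) =>
        conj a (conj b (conj c (conj d (let H' := IH (s t) (proj2 (proj2 (proj2 (proj2 (proj2 (proj2 (proj2 (proj2 (proj2 (proj2 (proj2 H))))))))))) in
          conj (proj1 H') (proj1 (proj2 H')))))) end) t Ht)
      as (E & D & C).
    assert (Eq : forall z, alpha z * u_term alpha lam s k (s z) = u_term alpha lam s (S k) z).
    { intro z. now rewrite u_rec. }
    destruct (HJ t Ht) as (_ & _ & _ & _ & _ & _ & a1 & a2 & a3 & a4 & a5 & a6).
    destruct (IH (s t) a6) as (_ & _ & b1 & b2).
    split; [|split; [|split]].
    + exact (ex_derive_ext _ _ t Eq E).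
    + apply (continuous_ext (Derive (fun x => alpha x * u_term alpha lam s k (s x)))).
      intro z. now apply Derive_ext. exact C.
    + rewrite <- Eq. rewrite Rabs_mult. simpl.
      pose proof (Rabs_pos (alpha t)). pose proof (pow_le (1/2) k). nra.
    + rewrite (Derive_ext (fun x => u_term alpha lam s (S k) x) (fun z => alpha z * u_term alpha lam s k (s z)) t (fun z => eq_sym (Eq z))), D. simpl.
      eapply Rle_trans. apply Rabs_triang. rewrite !Rabs_mult.
      pose proof (Rabs_pos (alpha t)). pose proof (Rabs_pos (u_term alpha lam s k (s t))).
      pose proof (Rabs_pos (Derive alpha t)). pose proof (Rabs_pos (ds t)).
      pose proof (Rabs_pos (Derive (fun x => u_term alpha lam s k x) (s t))).
      pose proof (pow_le (1/2) k). set (q := (1/2)^k) in *. assert (Rabs (ds t) * Rabs (Derive (fun x => u_term alpha lam s k x) (s t)) <= 2 * q) by nra. assert (Rabs (Derive alpha t) * Rabs (u_term alpha lam s k (s t)) <= q) by nra. nra.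
Qed.


Lemma geom_series4 : is_series (fun k => 4 * (1/2)^k) 8.
Proof.
  assert (H := is_series_geom (1/2)). rewrite Rabs_pos_eq in H by lra.
  specialize (H ltac:(lra)).
  assert (H2 := is_series_scal_l 4 _ _ H).
  replace 8 with (4 * / (1 - 1/2)) by field. exact H2.
Qed.

Lemma ex_le_geom (a : nat -> R) (c : R) : (forall n, Rabs (a n) <= c * (1/2)^n) -> ex_series a.
Proof.
  intro H. apply (ex_series_le a (fun n => c * (1/2)^n)). exact H.
  exists (c * / (1 - 1/2)).
  apply (is_series_scal_l c (fun n => (1/2)^n)). apply is_series_geom. rewrite Rabs_pos_eq; lra.
Qed.

Lemma sum_derive (U : nat -> R -> R) n y :
  (forall k, ex_derive (U k) y) ->
  is_derive (fun z => sum_f_R0 (fun k => U k z) n) y (sum_f_R0 (fun k => Derive (U k) y) n).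
Proof.
  intro H. induction n; simpl.
  - apply Derive_correct. apply H.
  - apply (is_derive_plus (fun z => sum_f_R0 (fun k => U k z) n) (fun z => U (S n) z)).
    exact IHn. apply Derive_correct. apply H.
Qed.

Lemma sum_cont (U : nat -> R -> R) n y :
  (forall k, continuous (U k) y) ->
  continuous (fun z => sum_f_R0 (fun k => U k z) n) y.
Proof.
  intro H. induction n; simpl.
  - apply H.
  - apply (cplus (fun z => sum_f_R0 (fun k => U k z) n) (fun z => U (S n) z)). exact IHn. apply H.
Qed.

Lemma J_C1 alpha lam s ds h : 0 < h -> Jhyp alpha lam s ds h ->
  (forall x, Rabs x < h -> ex_series (fun n => u_term alpha lam s n x)) /\
  C1_on (fun x => Series (fun n => u_term alpha lam s n x)) (h/2).
Proof.
  intros Hh HJ.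
  pose proof (J_bounds alpha lam s ds h HJ) as B.
  set (U := fun k x => u_term alpha lam s k x).
  set (S := fun x => Series (fun n => U n x)).
  assert (Ex : forall x, Rabs x < h -> ex_series (fun n => U n x)).
  { intros x Hx. apply (ex_le_geom _ 1). intro n. rewrite Rmult_1_l. apply (B n x Hx). }
  split. exact Ex.
  assert (Hh2 : 0 < h/2) by lra.
  set (r := mkposreal _ Hh2).
  set (clip := fun y => Rmax (-(h/2)) (Rmin (h/2) y)).
  assert (Hclip : forall y, Rabs (clip y) < h).
  { intro y. unfold clip. pose proof (Rmax_l (-(h/2)) (Rmin (h/2) y)).
    assert (Rmax (-(h/2)) (Rmin (h/2) y) <= h/2). { apply Rmax_lub. lra. apply Rmin_l. }
    apply Rabs_def1; lra. }
  assert (Hclip2 : forall y, Rabs y < h/2 -> clip y = y).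
  { intros y Hy. apply Rabs_def2 in Hy. unfold clip.
    rewrite Rmin_right by lra. rewrite Rmax_right by lra. reflexivity. }
  set (Du := fun k y => Derive (U k) (clip y)).
  assert (DuB : forall k y, Rabs (Du k y) <= 4 * (1/2)^k).
  { intros k y. apply (B k (clip y) (Hclip y)). }
  assert (DuE : forall y, ex_series (fun k => Du k y)).
  { intro y. apply (ex_le_geom _ 4). apply (fun k => DuB k y). }
  set (cv := fun y => exist (fun l => Un_cv (fun N => SP Du N y) l) (Series (fun k => Du k y))
          (proj1 (is_series_Reals _ _) (Series_correct _ (DuE y)))).
  assert (CVN : CVN_r Du r).
  { exists (fun k => 4 * (1/2)^k). exists 8. split.
    - apply (proj1 (is_series_Reals _ _)).
      apply (is_series_ext (fun k => 4 * (1/2)^k)). intro n. rewrite Rabs_pos_eq. reflexivity.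
      pose proof (pow_le (1/2) n). lra. exact geom_series4.
    - intros n y _. apply DuB. }
  assert (CVU' := CVN_CVU Du cv r CVN).
  assert (Cfn : forall n y, Boule 0 r y -> continuity_pt (SP Du n) y).
  { intros n y Hy. unfold Boule in Hy. simpl in Hy. rewrite Rminus_0_r in Hy.
    apply continuity_pt_filterlim.
    apply (continuous_ext_loc _ (fun z => sum_f_R0 (fun k => Derive (U k) z) n)).
    - apply (filter_imp (fun w => Rabs w < h/2)); [|now apply loc_abs].
      intros w Hw. unfold SP, Du. apply sum_eq. intros i _. now rewrite Hclip2.
    - apply sum_cont. intro k. apply (B k y). lra. }
  assert (Cg : forall y, Boule 0 r y -> continuity_pt (SFL Du cv) y).
  { intros y Hy. exact (CVU_continuity _ _ 0 r CVU' Cfn y Hy). }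
  assert (Dg : forall y, Rabs y < h/2 -> is_derive S y (SFL Du cv y)).
  { intros y Hy. apply is_derive_Reals.
    apply (derivable_pt_lim_CVU (fun n => SP U n) (fun n => SP Du n) S (SFL Du cv) y 0 r).
    - unfold Boule; simpl; rewrite Rminus_0_r; exact Hy.
    - intros z n Hz. unfold Boule in Hz. simpl in Hz. rewrite Rminus_0_r in Hz.
      apply is_derive_Reals.
      replace (SP Du n z) with (sum_f_R0 (fun k => Derive (U k) z) n).
      + apply sum_derive. intro k. apply (B k z). lra.
      + unfold SP, Du. apply sum_eq. intros i _. now rewrite Hclip2.
    - intros z Hz. unfold Boule in Hz. simpl in Hz. rewrite Rminus_0_r in Hz.
      apply (proj1 (is_series_Reals _ _)). apply Series_correct. apply Ex. lra.
    - exact CVU'.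
    - exact Cg. }
  intros x Hx. split.
  - eexists. now apply Dg.
  - apply (continuous_ext_loc _ (SFL Du cv)).
    + apply (filter_imp (fun w => Rabs w < h/2)); [|now apply loc_abs].
      intros w Hw. symmetry. apply is_derive_unique. now apply Dg.
    + apply continuity_pt_filterlim. apply Cg. unfold Boule; simpl; rewrite Rminus_0_r; exact Hx.
Qed.


Definition Pr (alpha lam s : R -> R) (r : R) :=
  (forall x, Rabs x < r -> ex_series (fun n => u_term alpha lam s n x)) /\
  C1_on (fun x => Series (fun n => u_term alpha lam s n x)) r.

Lemma Pr_mono (alpha lam s : R -> R) (r r' : R) : r' <= r -> Pr alpha lam s r -> Pr alpha lam s r'.
Proof.
  intros Hr [H1 H2]. split.
  - intros x Hx. apply H1. lra.
  - intros x Hx. apply H2. lra.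
Qed.

Lemma step (alpha lam s ds : R -> R) (eps rho : R) : 0 < rho <= eps ->
 (forall t, Rabs t < eps -> ex_derive alpha t /\ continuous (Derive alpha) t /\
    is_derive s t (ds t) /\ continuous ds t /\ ex_derive lam t /\ continuous (Derive lam) t /\
    Rabs (s t) <= Rabs t / 2) ->
 Pr alpha lam s (rho/2) -> Pr alpha lam s rho.
Proof.
  intros Hr H [P1 P2].
  set (S := fun x => Series (fun n => u_term alpha lam s n x)).
  assert (Hs : forall x, Rabs x < rho -> Rabs (s x) < rho/2).
  { intros x Hx. destruct (H x ltac:(lra)) as (_&_&_&_&_&_&h). lra. }
  assert (Ex : forall x, Rabs x < rho -> ex_series (fun n => u_term alpha lam s n x)).
  { intros x Hx. apply ex_series_incr_1.
    apply (ex_series_ext (fun n => alpha x * u_term alpha lam s n (s x))).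
    intro n. symmetry. apply u_rec.
    apply (ex_series_scal_l (alpha x) (fun n => u_term alpha lam s n (s x))).
    apply P1. now apply Hs. }
  split. exact Ex.
  assert (FE : forall x, Rabs x < rho -> S x = alpha x * (lam (s x) + S (s x))).
  { intros x Hx. unfold S. rewrite Series_incr_1 by now apply Ex.
    rewrite (Series_ext _ (fun n => alpha x * u_term alpha lam s n (s x))).
    2:{ intro n. apply u_rec. }
    rewrite Series_scal_l. change (u_term alpha lam s 0 x) with (alpha x * lam (s x)). ring. }
  set (G := fun z => lam z + S z).
  assert (KH : forall t, Rabs t < rho -> ex_derive alpha t /\ continuous (Derive alpha) t /\
    is_derive s t (ds t) /\ continuous ds t /\ ex_derive G (s t) /\ continuous (Derive G) (s t)).
  { intros t Ht. destruct (H t ltac:(lra)) as (h1&h2&h3&h4&_&_&_).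
    assert (Hst := Hs t Ht).
    assert (LG : forall w, Rabs w < rho/2 -> ex_derive lam w /\ continuous (Derive lam) w /\ ex_derive S w /\ continuous (Derive S) w).
    { intros w Hw. destruct (H w ltac:(lra)) as (_&_&_&_&l1&l2&_). destruct (P2 w Hw). auto. }
    destruct (LG _ Hst) as (l1&l2&l3&l4).
    split; [auto|split; [auto|split; [auto|split; [auto|split]]]].
    - exact (ex_derive_plus lam S (s t) l1 l3).
    - apply (continuous_ext_loc _ (fun w => Derive lam w + Derive S w)).
      + apply (filter_imp (fun w => Rabs w < rho/2)); [|now apply loc_abs].
        intros w Hw. destruct (LG w Hw) as (m1&_&m3&_). symmetry. exact (Derive_plus lam S w m1 m3).
      + now apply cplus. }
  intros t Ht.
  destruct (key alpha G s ds rho KH t Ht) as (E & _ & C).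
  destruct (C1_ext S (fun x => alpha x * G (s x)) rho t FE Ht E C) as (A & B & _).
  split; assumption.
Qed.

Lemma iter_P (alpha lam s ds : R -> R) (eps : R) : 0 < eps ->
 (forall t, Rabs t < eps -> ex_derive alpha t /\ continuous (Derive alpha) t /\
    is_derive s t (ds t) /\ continuous ds t /\ ex_derive lam t /\ continuous (Derive lam) t /\
    Rabs (s t) <= Rabs t / 2) ->
 forall n j, Pr alpha lam s (eps * (1/2)^(j+n)) -> Pr alpha lam s (eps * (1/2)^j).
Proof.
  intros He H n. induction n; intros j Hp.
  - rewrite Nat.add_0_r in Hp. exact Hp.
  - rewrite <- plus_n_Sm in Hp. change (S j + n)%nat with (S (j + n)) in *.
    apply (IHn (S j)) in Hp.
    apply (step alpha lam s ds eps). 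
    + assert (0 < (1/2)^j) by (apply pow_lt; lra).
      assert ((1/2)^j <= 1).
      { clear. induction j. simpl; lra. simpl. pose proof (pow_le (1/2) j). lra. }
      split. nra. nra.
    + exact H.
    + replace (eps * (1/2)^j / 2) with (eps * (1/2)^(S j)) by (simpl; field). exact Hp.
Qed.


Lemma abs_between (x c : R) : Rmin 0 x <= c <= Rmax 0 x -> Rabs c <= Rabs x.
Proof.
  intros [H1 H2]. destruct (Rle_dec 0 x).
  - rewrite Rmin_left in H1 by lra. rewrite Rmax_right in H2 by lra.
    rewrite !Rabs_pos_eq; lra.
  - rewrite Rmin_right in H1 by lra. rewrite Rmax_left in H2 by lra.
    rewrite (Rabs_left x) by lra. apply Rabs_le. lra.
Qed.

Theorem lemma3p11 :
  forall (b theta : R -> R),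
    (* b is a smooth germ at 0 with b - 1 flat at 0 *)
    (exists r, 0 < r /\ smooth_on b r) ->
    flat_at0 (fun t => b t - 1) ->
    (* theta is a smooth germ at 0, the inverse germ of t |-> t b(t) *)
    (exists r, 0 < r /\ smooth_on theta r) ->
    theta 0 = 0 ->
    (exists d, 0 < d /\
       (forall t, Rabs t < d -> theta (t * b t) = t) /\
       (forall x, Rabs x < d -> theta x * b (theta x) = x)) ->
    let sigma := fun x => (theta x) ^ 4 in
    exists eps, 0 < eps /\
      forall alpha lambda : R -> R,
        smooth_on alpha eps -> alpha 0 = 0 -> Derive alpha 0 = 0 ->
        C1_on lambda eps -> lambda 0 = 0 -> Derive lambda 0 = 0 ->
        (forall x, Rabs x < eps -> ex_series (fun n => u_term alpha lambda sigma n x)) /\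
        C1_on (fun x => Series (fun n => u_term alpha lambda sigma n x)) eps.
Proof.
  intros b theta _ _ [rt [Hrt Hth]] Hth0 _ sigma.
  set (ds := fun x => INR 4 * Derive theta x * theta x ^ 3).
  assert (Th : forall x, Rabs x < rt -> is_derive sigma x (ds x) /\ continuous ds x).
  { intros x Hx. assert (E1 : ex_derive theta x) by exact (Hth 1%nat x Hx).
    assert (E2 : ex_derive (Derive theta) x) by exact (Hth 2%nat x Hx).
    split.
    - exact (is_derive_pow theta 4 x _ (Derive_correct _ _ E1)).
    - unfold ds. apply cmult. apply cmult. apply continuous_const. now apply exd_cont.
      apply (continuous_ext (fun y => theta y * (theta y * (theta y * 1)))). intro; reflexivity.
      assert (Ct := exd_cont _ _ E1).
      apply cmult; auto. apply cmult; auto. apply cmult; auto. apply continuous_const. }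
  assert (ds0 : ds 0 = 0). { unfold ds. rewrite Hth0. ring. }
  destruct (cont_small ds 0 (1/2) (proj2 (Th 0 ltac:(rewrite Rabs_R0; lra))) ltac:(lra)) as [dl [Hdl Hds]].
  set (eps := Rmin dl rt).
  assert (Heps : 0 < eps) by (unfold eps; apply Rmin_glb_lt; lra).
  assert (Hin : forall x, Rabs x < eps -> Rabs x < dl /\ Rabs x < rt).
  { intros x Hx. pose proof (Rmin_l dl rt). pose proof (Rmin_r dl rt). unfold eps in Hx. lra. }
  assert (Sg : forall x, Rabs x < eps -> is_derive sigma x (ds x) /\ continuous ds x /\
                Rabs (ds x) <= 1/2 /\ Rabs (sigma x) <= Rabs x / 2).
  { intros x Hx. destruct (Hin x Hx) as [h1 h2]. destruct (Th x h2) as [T1 T2].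
    assert (Hd : forall y, Rabs y < eps -> Rabs (ds y) <= 1/2).
    { intros y Hy. destruct (Hin y Hy) as [g1 g2]. specialize (Hds y).
      rewrite ds0, !Rminus_0_r in Hds. specialize (Hds g1). lra. }
    split; [exact T1|split; [exact T2|split; [now apply Hd|]]].
    destruct (MVT_abs sigma ds 0 x) as [c [Hc1 Hc2]].
    { intros c Hc. apply is_derive_Reals. pose proof (abs_between x c Hc).
      apply (Th c). destruct (Hin x Hx). lra. }
    assert (sigma 0 = 0) by (unfold sigma; rewrite Hth0; ring).
    rewrite H, !Rminus_0_r in Hc1. rewrite Hc1.
    pose proof (abs_between x c Hc2). assert (Rabs c < eps) by lra.
    pose proof (Hd c H1). pose proof (Rabs_pos x). pose proof (Rabs_pos (ds c)). nra. }
  exists eps. split. exact Heps.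
  intros alpha lam Ha Ha0 Hda0 Hl Hl0 Hdl0.
  assert (AL : forall t, Rabs t < eps -> ex_derive alpha t /\ continuous (Derive alpha) t /\
    is_derive sigma t (ds t) /\ continuous ds t /\ ex_derive lam t /\ continuous (Derive lam) t /\
    Rabs (sigma t) <= Rabs t / 2).
  { intros t Ht. destruct (Sg t Ht) as (s1&s2&_&s4). destruct (Hl t Ht) as [l1 l2].
    assert (E1 : ex_derive alpha t) by exact (Ha 1%nat t Ht).
    assert (E2 : ex_derive (Derive alpha) t) by exact (Ha 2%nat t Ht).
    exact (conj E1 (conj (exd_cont _ _ E2) (conj s1 (conj s2 (conj l1 (conj l2 s4)))))). }
  assert (H0e : Rabs 0 < eps) by (rewrite Rabs_R0; lra).
  destruct (AL 0 H0e) as (c1&c2&_&_&c5&c6&_).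
  destruct (cont_small alpha 0 (1/4) (exd_cont _ _ c1) ltac:(lra)) as [d1 [Hd1 B1]].
  destruct (cont_small (Derive alpha) 0 (1/4) c2 ltac:(lra)) as [d2 [Hd2 B2]].
  destruct (cont_small lam 0 (1/4) (exd_cont _ _ c5) ltac:(lra)) as [d3 [Hd3 B3]].
  destruct (cont_small (Derive lam) 0 (1/4) c6 ltac:(lra)) as [d4 [Hd4 B4]].
  set (h := Rmin (Rmin d1 d2) (Rmin (Rmin d3 d4) eps)).
  assert (Hh : 0 < h) by (unfold h; repeat apply Rmin_glb_lt; lra).
  assert (Hhin : forall x, Rabs x < h -> Rabs x < d1 /\ Rabs x < d2 /\ Rabs x < d3 /\ Rabs x < d4 /\ Rabs x < eps).
  { intros x Hx. unfold h in Hx.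
    pose proof (Rmin_l (Rmin d1 d2) (Rmin (Rmin d3 d4) eps)).
    pose proof (Rmin_r (Rmin d1 d2) (Rmin (Rmin d3 d4) eps)).
    pose proof (Rmin_l d1 d2). pose proof (Rmin_r d1 d2).
    pose proof (Rmin_l (Rmin d3 d4) eps). pose proof (Rmin_r (Rmin d3 d4) eps).
    pose proof (Rmin_l d3 d4). pose proof (Rmin_r d3 d4). lra. }
  assert (HJ : Jhyp alpha lam sigma ds h).
  { intros t Ht. destruct (Hhin t Ht) as (e1&e2&e3&e4&e5).
    destruct (AL t e5) as (a1&a2&a3&a4&a5&a6&a7).
    destruct (Sg t e5) as (_&_&s3&_).
    specialize (B1 t). specialize (B2 t). specialize (B3 t). specialize (B4 t).
    rewrite !Rminus_0_r in B1, B2, B3, B4.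
    rewrite Ha0 in B1. rewrite Hda0 in B2. rewrite Hl0 in B3. rewrite Hdl0 in B4.
    rewrite Rminus_0_r in B1, B2, B3, B4.
    pose proof (Rabs_pos t).
    specialize (B1 e1). specialize (B2 e2). specialize (B3 e3). specialize (B4 e4).
    refine (conj a1 (conj a2 (conj a3 (conj a4 (conj a5 (conj a6 _)))))).
    repeat (apply conj); lra. }
  destruct (J_C1 alpha lam sigma ds h Hh HJ) as [J1 J2].
  assert (Pb : Pr alpha lam sigma (h/2)).
  { split. intros x Hx. apply J1. lra. exact J2. }
  assert (Hq : 0 < (h/2)/eps) by (apply Rdiv_lt_0_compat; lra).
  destruct (pow_lt_1_zero (1/2) ltac:(rewrite Rabs_pos_eq; lra) _ Hq) as [N HN].
  specialize (HN N (le_n N)). rewrite Rabs_pos_eq in HN by (apply pow_le; lra).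
  assert (PN : Pr alpha lam sigma (eps * (1/2)^(0 + N))).
  { apply (Pr_mono _ _ _ (h/2)).
    simpl plus. apply Rmult_lt_compat_l with (r := eps) in HN; [|lra].
    replace (eps * (h / 2 / eps)) with (h/2) in HN by (field; lra). rewrite Nat.add_0_l. lra.
    exact Pb. }
  pose proof (iter_P alpha lam sigma ds eps Heps AL N 0 PN) as P0.
  simpl in P0. rewrite Rmult_1_r in P0. exact P0.
Qed.
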